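(* Let $r\geq 3$ be an integer and $c>0$ a real number. If $G$ is a graph of order $n$ with $$e(G)>\left(\frac{r-1}{2r}+c\right)n^{2},$$ then $$k_{r+1}(G)>2c\,\frac{r}{r+1}\left(\frac{n}{r}\right)^{r+1}\qquad\text{and}\qquad js^{(2,r+1,2)}(G)>2c\left(\frac{n}{r}\right)^{r-1}.$$
   Context: All graphs are finite and simple. $e(G)$ is the number of edges of $G$ and $k_s(G)$ is the number of $s$-cliques (complete subgraphs on $s$ vertices) of $G$. For an integer $r\geq 2$, $js^{(2,r+1,2)}(G)$ (the $(2,r+1,2)$-jointsize of $G$) is the maximum, over all edges $uv$ of $G$, of the number of $(r+1)$-cliques of $G$ containing both $u$ and $v$ (and $0$ if $G$ has no edges). *)

(* Defs.v *)
From mathcomp Require Import all_boot all_order all_algebra.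
Set Implicit Arguments. Unset Strict Implicit. Unset Printing Implicit Defensive.

Definition simple_graph (T : finType) (e : rel T) : Prop :=
  symmetric e /\ irreflexive e.

Definition is_clique (T : finType) (e : rel T) (A : {set T}) : bool :=
  [forall u in A, forall v in A, (u != v) ==> e u v].

Definition kcliques (T : finType) (e : rel T) (s : nat) : nat :=
  #|[set A : {set T} | is_clique e A && (#|A| == s)]|.

Definition kcliques_through (T : finType) (e : rel T) (s : nat) (u v : T) : nat :=
  #|[set A : {set T} | [&& is_clique e A, #|A| == s, u \in A & v \in A]]|.

(* js^{(2,r+1,2)}(G): max over edges uv of number of (r+1)-cliques containing u and v;
   0 if no edges *)
Definition jointsize (T : finType) (e : rel T) (r : nat) : nat :=
  \max_(p : T * T | e p.1 p.2) kcliques_through e r.+1 p.1 p.2.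

Definition num_edges (T : finType) (e : rel T) : nat :=
  #|[set A : {set T} | is_clique e A && (#|A| == 2)]|.

(* Main.v *)
Require Import Defs.
From mathcomp Require Import all_boot all_order all_algebra.
From mathcomp Require Import ring lra.
Set Implicit Arguments. Unset Strict Implicit.

Section Comb.
Variables (T : finType) (e : rel T).
Hypothesis esym : symmetric e.
Hypothesis eirr : irreflexive e.

Definition cl s := [set A : {set T} | is_clique e A && (#|A| == s)].
Definition Nb (L : {set T}) := [set w | (w \notin L) && [forall u in L, e u w]].

Lemma in_cl s (A : {set T}) : (A \in cl s) = is_clique e A && (#|A| == s).
Proof. by rewrite inE. Qed.


Lemma cliqueP (A : {set T}) : reflect (forall u v, u \in A -> v \in A -> u != v -> e u v) (is_clique e A).
Proof.
apply: (iffP forallP) => H.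
  move=> u v uA vA uv; move: (H u); rewrite uA /= => /forallP/(_ v).
  by rewrite vA uv.
move=> u; apply/implyP=> uA; apply/forallP=> v; apply/implyP=> vA; apply/implyP.
exact: H.
Qed.

Lemma clique_sub (A B : {set T}) : B \subset A -> is_clique e A -> is_clique e B.
Proof.
move=> /subsetP sBA /cliqueP H; apply/cliqueP=> u v uB vB; apply: H; exact: sBA.
Qed.

Lemma NbP (L : {set T}) w : reflect (w \notin L /\ forall u, u \in L -> e u w) (w \in Nb L).
Proof.
rewrite inE; apply: (iffP andP) => [[wL /forallP H]|[wL H]]; split => //.
  by move=> u uL; move: (H u); rewrite uL.
by apply/forallP=> u; apply/implyP; apply: H.
Qed.

Lemma cl_add s (L : {set T}) w : L \in cl s -> w \in Nb L -> w |: L \in cl s.+1.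
Proof.
rewrite in_cl => /andP[cL /eqP cs] /NbP[wL H].
rewrite in_cl cardsU1 wL cs eqxx andbT.
apply/cliqueP=> u v; rewrite !inE => /orP[/eqP->|uL] /orP[/eqP->|vL].
- by rewrite eqxx.
- by move=> _; rewrite esym; apply: H.
- by move=> _; apply: H.
- by move/cliqueP: cL; apply.
Qed.

Lemma cl_del s (K : {set T}) w : K \in cl s.+1 -> w \in K -> (K :\ w \in cl s) && (w \in Nb (K :\ w)).
Proof.
rewrite !in_cl => /andP[cK /eqP cs] wK.
have ->: is_clique e (K :\ w) by apply: clique_sub cK; apply: subsetDl.
move: (cardsD1 w K); rewrite wK cs add1n => -[] ->; rewrite eqxx /=.
apply/NbP; split; first by rewrite in_setD1 eqxx.
move=> u; rewrite in_setD1 => /andP[uw uK].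
by move/cliqueP: cK; apply.
Qed.

Definition Pw s w := [set L in cl s | w \in Nb L].
Definition Qw s w := [set K in cl s.+1 | w \in K].

Lemma in_Pw s w L : (L \in Pw s w) = (L \in cl s) && (w \in Nb L).
Proof. by rewrite in_set. Qed.

Lemma in_Qw s w K : (K \in Qw s w) = (K \in cl s.+1) && (w \in K).
Proof. by rewrite in_set. Qed.

Lemma inj_add s w : {in Pw s w &, injective (fun L => w |: L)}.
Proof.
move=> L1 L2; rewrite !in_Pw => /andP[_ /NbP[w1 _]] /andP[_ /NbP[w2 _]] E.
by rewrite -(setU1K w1) E setU1K.
Qed.

Lemma Qw_img s w : Qw s w = (fun L => w |: L) @: Pw s w.
Proof.
apply/setP=> K; apply/idP/imsetP.
  rewrite in_Qw => /andP[Kc wK]; exists (K :\ w); last by rewrite setD1K.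
  by rewrite in_Pw; apply: cl_del.
move=> [L]; rewrite in_Pw => /andP[Lc wL] ->.
by rewrite in_Qw (cl_add Lc wL) setU11.
Qed.

Lemma card_nat (A : {set T}) : \sum_x (x \in A : nat) = #|A|.
Proof. by rewrite -sum1_card [RHS]big_mkcond /=; apply: eq_bigr => x _; case: (x \in A). Qed.

Lemma factA s : \sum_(L in cl s) #|Nb L| = s.+1 * #|cl s.+1|.
Proof.
transitivity (\sum_(L in cl s) \sum_(w in Nb L) 1).
  by apply: eq_bigr => L _; rewrite sum1_card.
rewrite (exchange_big_dep predT) //=.
transitivity (\sum_w \sum_(K in cl s.+1 | w \in K) 1).
  apply: eq_bigr => w _.
  rewrite (_ : \sum_(L in cl s | w \in Nb L) 1 = \sum_(L in Pw s w) 1); last first.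
    by apply: eq_bigl => L; rewrite in_Pw.
  rewrite sum1_card -(card_in_imset (@inj_add s w)) -Qw_img -sum1_card.
  by apply: eq_bigl => K; rewrite in_Qw.
rewrite -(exchange_big_dep predT) //=.
rewrite mulnC -sum_nat_const; apply: eq_bigr => K.
by rewrite inE => /andP[_ /eqP <-]; rewrite sum1_card.
Qed.

Lemma perK s (K : {set T}) x : K \in cl s.+1 ->
  #|[set v in K | x \in Nb (K :\ v)]| <= 1 + s * (x \in Nb K).
Proof.
rewrite inE => /andP[cK /eqP cs].
case: (boolP (x \in Nb K)) => xN.
  rewrite muln1 add1n -cs; apply: subset_leq_card; apply/subsetP=> v.
  by rewrite inE => /andP[].
rewrite muln0 addn0.
have [y yP] : exists y, forall v, v \in K -> v != y -> x \notin Nb (K :\ v).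
  case: (boolP (x \in K)) => xK.
    exists x => v vK vx; apply/NbP => -[+ _]; by rewrite !inE eq_sym vx xK.
  have: ~~ [forall u in K, e u x] by move: xN; rewrite inE xK.
  rewrite negb_forall => /existsP[u]; rewrite negb_imply => /andP[uK nux].
  exists u => v vK vu; apply/NbP => -[_ H].
  by move: (H u); rewrite !inE eq_sym vu uK => /(_ isT); apply/negP.
rewrite -(cards1 y); apply: subset_leq_card; apply/subsetP=> v.
rewrite in_set => /andP[vK xv]; apply/negPn/negP => vy.
by move: vy; rewrite in_set1 => vy; move: (yP v vK vy); rewrite xv.
Qed.

Lemma sqsum s : \sum_(L in cl s) #|Nb L| ^ 2 =
  \sum_(K in cl s.+1) \sum_(w in K) #|Nb (K :\ w)|.
Proof.
transitivity (\sum_(L in cl s) \sum_(w in Nb L) #|Nb L|).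
  apply: eq_bigr => L _; rewrite sum_nat_const; by rewrite expnS expn1.
rewrite (exchange_big_dep predT) //=.
transitivity (\sum_w \sum_(K in cl s.+1 | w \in K) #|Nb (K :\ w)|).
  apply: eq_bigr => w _.
  rewrite (_ : \sum_(L in cl s | w \in Nb L) #|Nb L| = \sum_(L in Pw s w) #|Nb L|); last first.
    by apply: eq_bigl => L; rewrite in_Pw.
  have ->: \sum_(K in cl s.+1 | w \in K) #|Nb (K :\ w)| =
           \sum_(K in Qw s w) #|Nb (K :\ w)|.
    by apply: eq_bigl => K; rewrite in_Qw.
  rewrite Qw_img big_imset; last exact: inj_add.
  apply: eq_bigr => L; rewrite in_Pw => /andP[_ /NbP[wL _]].
  by rewrite setU1K.
by rewrite -(exchange_big_dep predT) //=.
Qed.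

Lemma perK2 s K : K \in cl s.+1 ->
  \sum_(v in K) #|Nb (K :\ v)| <= #|T| + s * #|Nb K|.
Proof.
move=> Kc.
rewrite (_ : \sum_(v in K) #|Nb (K :\ v)| = \sum_(v in K) \sum_x (x \in Nb (K :\ v) : nat)); last first.
  by apply: eq_bigr => v _; rewrite card_nat.
rewrite exchange_big /=.
apply: leq_trans (_ : \sum_x (1 + s * (x \in Nb K)) <= _).
  apply: leq_sum => x _.
  apply: leq_trans (perK x Kc).
  rewrite -sum1_card [X in _ <= X]big_mkcond /= big_mkcond /= leq_sum // => v _.
  by rewrite in_set; case: (v \in K); case: (x \in Nb (K :\ v)).
by rewrite big_split /= sum1_card -big_distrr /= card_nat.
Qed.

Lemma factB s : \sum_(L in cl s) #|Nb L| ^ 2 <=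
  #|T| * #|cl s.+1| + s * s.+2 * #|cl s.+2|.
Proof.
rewrite sqsum.
apply: leq_trans (_ : \sum_(K in cl s.+1) (#|T| + s * #|Nb K|) <= _).
  by apply: leq_sum => K Kc; apply: perK2.
rewrite big_split /= sum_nat_const -big_distrr /= factA mulnA.
by rewrite mulnC.
Qed.

Lemma k1 : #|cl 1| = #|T|.
Proof.
have ->: cl 1 = [set [set x] | x : T].
  apply/setP=> A; rewrite in_cl; apply/andP/imsetP.
    by move=> [_ /cards1P[x ->]]; exists x.
  move=> [x _ ->]; rewrite cards1; split => //.
  by apply/cliqueP=> u v; rewrite !in_set1 => /eqP-> /eqP->; rewrite eqxx.
by rewrite card_imset //; apply: set1_inj.
Qed.

Lemma kt_sum s u v : kcliques_through e s u v = \sum_(A in cl s) ((u \in A) && (v \in A) : nat).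
Proof.
rewrite /kcliques_through -sum1dep_card big_mkcond [RHS]big_mkcond /=.
apply: eq_bigr => A _; rewrite in_cl.
by case: (is_clique e A); case: (#|A| == s); case: (u \in A); case: (v \in A).
Qed.

Lemma pairs_in_clique s A : A \in cl s ->
  \sum_u \sum_v (e u v && ((u \in A) && (v \in A)) : nat) = s * s.-1.
Proof.
rewrite in_cl => /andP[cA /eqP cs].
rewrite (bigID (mem A)) /= [X in _ + X]big1 ?addn0; last first.
  by move=> u uA; apply: big1 => v _; rewrite (negbTE uA) andbF.
rewrite -cs -sum_nat_const; apply: eq_bigr => u uA.
rewrite -[RHS](_ : #|A :\ u| = _); last by rewrite (cardsD1 u A) uA.
rewrite -card_nat; apply: eq_bigr => v _; rewrite in_setD1 uA /=.
case: (boolP (v \in A)) => vA; rewrite ?andbT ?andbF //.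
case: (eqVneq v u) => [->|vu]; first by rewrite eirr.
by move/cliqueP: cA => /(_ u v uA vA); rewrite eq_sym vu => /(_ isT) ->.
Qed.

Lemma js_sum s : \sum_(p : T * T | e p.1 p.2) kcliques_through e s p.1 p.2 = s * s.-1 * #|cl s|.
Proof.
rewrite big_mkcond /= -(pair_big xpredT xpredT (fun u v => if e u v then kcliques_through e s u v else 0)) /=.
rewrite (_ : \sum_u \sum_v _ = \sum_u \sum_v \sum_(A in cl s) (e u v && ((u \in A) && (v \in A)) : nat)); last first.
  apply: eq_bigr => u _; apply: eq_bigr => v _; rewrite kt_sum.
  case: (e u v) => //=; by rewrite big1.
rewrite (eq_bigr (fun u => \sum_(A in cl s) \sum_v (e u v && ((u \in A) && (v \in A)) : nat))); last first.
  by move=> u _; rewrite exchange_big.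
rewrite exchange_big /= mulnC -sum_nat_const; apply: eq_bigr => A Ac.
exact: pairs_in_clique.
Qed.
End Comb.
Unset Implicit Arguments. Set Strict Implicit.
Import Order.TTheory GRing.Theory Num.Theory.
Local Open Scope ring_scope.
Section Real.
Variables (R : realFieldType) (T : finType) (e : rel T).
Hypothesis esym : symmetric e.
Hypothesis eirr : irreflexive e.

Local Notation n := (#|T|%:R : R).
Local Notation k j := ((#|cl e j|)%:R : R).

Lemma step (s : nat) (lam : R) : 0 <= lam -> lam * k s <= (s.+1)%:R * k s.+1 ->
  (lam * (s.+1)%:R - n) * k s.+1 <= (s * s.+2)%:R * k s.+2.
Proof.
move=> l0 H.
pose a (L : {set T}) : R := (#|Nb e L|)%:R.
have SA : \sum_(L in cl e s) a L = (s.+1)%:R * k s.+1.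
  by rewrite /a -natr_sum factA // natrM.
have SB : \sum_(L in cl e s) a L ^+ 2 <= n * k s.+1 + (s * s.+2)%:R * k s.+2.
  have := factB esym s; rewrite -(ler_nat R) natrD !natrM natr_sum.
  by rewrite (eq_bigr (fun L => a L ^+ 2)) // => L _; rewrite /a natrX.
have S0 : 0 <= \sum_(L in cl e s) (a L - lam) ^+ 2.
  by apply: sumr_ge0 => L _; apply: sqr_ge0.
have E : \sum_(L in cl e s) (a L - lam) ^+ 2 =
   \sum_(L in cl e s) a L ^+ 2 - 2 * lam * \sum_(L in cl e s) a L + lam ^+ 2 * k s.
  rewrite (eq_bigr (fun L => a L ^+ 2 + ((- (2 * lam)) * a L + lam ^+ 2))); last first.
    by move=> L _; ring.
  rewrite big_split big_split /= -mulr_sumr sumr_const -mulr_natr; ring.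
have H2 : lam ^+ 2 * k s <= lam * ((s.+1)%:R * k s.+1).
  by rewrite expr2 -mulrA ler_wpM2l.
move: S0; rewrite E SA => S0.
move: SB H2 S0; set X := \sum_(L in cl e s) a L ^+ 2.
move=> SB H2 S0; nra.
Qed.

Variables (r : nat) (m beta : R).
Hypothesis hn : n = r%:R * m.
Hypothesis hm : 0 <= m.
Hypothesis hb : beta * n = 2 * k 2.
Hypothesis hbeta : (r%:R - 1) * m <= beta.

Lemma lam_ge j : (j < r)%N -> (r%:R - j.+1%:R) * m <= j.+1%:R * beta - j%:R * n.
Proof.
move=> jr; rewrite hn.
have e1 : j.+1%:R = j%:R + 1 :> R by rewrite -natr1.
rewrite e1.
have : 0 <= j%:R + 1 :> R by rewrite -e1 ler0n.
move: hbeta; nra.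
Qed.

Lemma lam_ge0 j : (j < r)%N -> 0 <= j.+1%:R * beta - j%:R * n.
Proof.
move=> jr; apply: (le_trans _ (lam_ge _ jr)); apply: mulr_ge0 => //.
by rewrite subr_ge0 ler_nat.
Qed.

Lemma Pind j : (j < r)%N -> (j.+1%:R * beta - j%:R * n) * k j.+1 <= j.+2%:R * k j.+2.
Proof.
elim: j => [|j IH] jr.
  by rewrite mul0r subr0 mul1r k1 hb.
have jr' : (j < r)%N by apply: ltnW.
have := step j.+1 _ (lam_ge0 _ jr') (IH jr').
have -> : (j.+1%:R * beta - j%:R * n) * j.+2%:R - n =
          j.+1%:R * (j.+2%:R * beta - j.+1%:R * n) :> R.
  rewrite -[j.+2%:R]natr1 -[j.+1%:R]natr1; ring.
by rewrite natrM -!mulrA ler_pM2l // ltr0n.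
Qed.

Lemma Tur j : (j < r)%N -> ('C(r, j.+1))%:R * m ^+ j.+1 <= k j.+1.
Proof.
elim: j => [|j IH] jr.
  by rewrite bin1 expr1 k1 hn.
have jr' : (j < r)%N by apply: ltnW.
have Hk := IH jr'.
have HP := Pind _ jr'.
have HL := lam_ge _ jr'.
rewrite -(@ler_pM2l _ (j.+2%:R)); last by rewrite ltr0n.
apply: le_trans HP.
have ee : j.+2%:R * ('C(r, j.+2)%:R * m ^+ j.+2) =
   ((r%:R - j.+1%:R) * m) * ('C(r, j.+1)%:R * m ^+ j.+1) :> R.
  rewrite mulrA -natrM mul_bin_left natrM natrB; last by [].
  by rewrite exprS; ring.
rewrite ee; apply: ler_pM => //.
  by apply: mulr_ge0 => //; rewrite subr_ge0 ler_nat; apply: ltnW.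
by apply: mulr_ge0; [apply: ler0n | apply: exprn_ge0].
Qed.
End Real.

Theorem lemma1 (R : realFieldType) (T : finType) (e : rel T) (r : nat) (c : R) :
  simple_graph e -> (3 <= r)%N -> 0 < c ->
  ((num_edges e)%:R > ((r%:R - 1) / (2 * r%:R) + c) * (#|T|%:R) ^+ 2) ->
  (kcliques e r.+1)%:R > 2 * c * (r%:R / (r.+1)%:R) * (#|T|%:R / r%:R) ^+ r.+1
  /\ (jointsize e r)%:R > 2 * c * (#|T|%:R / r%:R) ^+ r.-1.
Proof.
move=> [esym eirr] r3 c0 hE.
have r0 : (0 < r)%N by apply: leq_trans r3.
have rR : 0 < r%:R :> R by rewrite ltr0n.
have hE2 : (num_edges e = #|cl e 2|)%N by [].
have hK : (kcliques e r.+1 = #|cl e r.+1|)%N by [].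
rewrite hK; rewrite hE2 in hE.
have nT : (0 < #|T|)%N.
  have : (0 < #|cl e 2|)%N.
    rewrite -(ltr0n R); apply: le_lt_trans hE; apply: mulr_ge0; last exact: sqr_ge0.
    apply: addr_ge0; last exact: ltW.
    apply: divr_ge0; last by apply: mulr_ge0 => //; apply: ltW.
    by rewrite subr_ge0 ler1n.
  case/card_gt0P => A; rewrite in_cl => /andP[_ /eqP A2].
  by apply: leq_trans (max_card A); rewrite A2.
have nR : 0 < #|T|%:R :> R by rewrite ltr0n.
set n := #|T|%:R : R in hE nR *.
set m := n / r%:R.
have hn : n = r%:R * m by rewrite /m mulrC divfK // gt_eqF.
have mp : 0 < m by rewrite /m divr_gt0.
have hm : 0 <= m by apply: ltW.
set E := (#|cl e 2|)%:R : R in hE.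
set beta := 2 * E / n.
have hb : beta * n = 2 * E by rewrite /beta divfK // gt_eqF.
have hrho : (r%:R - 1) / (2 * r%:R) * (2 * r%:R) = r%:R - 1 :> R.
  by rewrite divfK // mulf_neq0 // gt_eqF.
have hbs : ((r%:R - 1) * m + 2 * c * r%:R * m) < beta.
  rewrite -(ltr_pM2r nR) hb.
  have : ((r%:R - 1) * m + 2 * c * r%:R * m) * n = 2 * ((r%:R - 1) / (2 * r%:R) + c) * n ^+ 2.
    rewrite hn; field; by rewrite gt_eqF.
  move=> ->; move: hE; set rho := (r%:R - 1) / (2 * r%:R) => hE; nra.
have hbeta : (r%:R - 1) * m <= beta.
  apply: ltW; apply: le_lt_trans hbs; rewrite lerDl.
  by apply: mulr_ge0 => //; apply: mulr_ge0 => //; apply: mulr_ge0 => //; apply: ltW.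
have rr : (r.-1 < r)%N by rewrite prednK.
have HP := @Pind R T e esym r m beta hn hm hb hbeta _ rr.
have HT := @Tur R T e esym r m beta hn hm hb hbeta _ rr.
rewrite prednK // in HP HT.
rewrite binn mul1r in HT.
set K := (#|cl e r|)%:R : R in HP HT.
set K1 := (#|cl e r.+1|)%:R : R in HP *.
set W := m ^+ r.-1.
have mr : m ^+ r = m * W by rewrite /W -exprS prednK.
have mr1 : m ^+ r.+1 = m * (m * W) by rewrite exprS mr.
have W0 : 0 < W by rewrite /W exprn_gt0.
rewrite mr in HT.
have e1 : r.-1%:R = r%:R - 1 :> R by rewrite -[in RHS](prednK r0) -natr1 addrK.
rewrite e1 in HP.
have key : 2 * c * r%:R ^+ 2 * m * (m * W) < r.+1%:R * K1.
  apply: lt_le_trans HP.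
  have h1 : 2 * c * r%:R * n < r%:R * beta - (r%:R - 1) * n.
    rewrite hn; nra.
  have h2 : 2 * c * r%:R * n * (m * W) <= 2 * c * r%:R * n * K.
    rewrite ler_pM2l //; apply: mulr_gt0 => //; apply: mulr_gt0 => //.
    by apply: mulr_gt0.
  have K0 : 0 < K by apply: lt_le_trans HT; apply: mulr_gt0.
  have h3 : 2 * c * r%:R * n * K < (r%:R * beta - (r%:R - 1) * n) * K.
    by rewrite ltr_pM2r.
  have : 2 * c * r%:R ^+ 2 * m * (m * W) = 2 * c * r%:R * n * (m * W).
    by rewrite hn; ring.
  move=> ->; apply: le_lt_trans h2 h3.
have r1 : 1 <= r%:R :> R by rewrite ler1n.
have pos : 0 < 2 * c * r%:R * m * (m * W).
  by do 4! apply: mulr_gt0 => //.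
split.
  rewrite mr1.
  have : 2 * c * (r%:R / r.+1%:R) * (m * (m * W)) = (2 * c * r%:R * m * (m * W)) / r.+1%:R.
    rewrite mulrA; field; rewrite gt_eqF //; lra.
  move=> ->; rewrite ltr_pdivrMr ?ltr0n // [_ * r.+1%:R]mulrC.
  apply: (le_lt_trans _ key).
  have : 2 * c * r%:R ^+ 2 * m * (m * W) = r%:R * (2 * c * r%:R * m * (m * W)).
    by ring.
  move=> ->; rewrite ler_peMl //; apply: ltW => //.
have JS : (r.+1 * r * #|cl e r.+1| <= #|T| * #|T| * jointsize e r)%N.
  rewrite -[r in (_.+1 * r)%N]/(r.+1.-1) -(js_sum eirr).
  apply: leq_trans (_ : \sum_(p : T * T | e p.1 p.2) jointsize e r <= _)%N.
    apply: leq_sum => p ep; rewrite /jointsize.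
    exact: (leq_bigmax_cond p ep).
  apply: leq_trans (_ : \sum_(p : T * T) jointsize e r <= _)%N.
    by rewrite [X in (_ <= X)%N](bigID (fun p : T * T => e p.1 p.2)) /= leq_addr.
  by rewrite sum_nat_const card_prod.
move: JS; rewrite -(ler_nat R) !natrM -/n -/K1.
set J := (jointsize e r)%:R : R => JS.
have n2 : 0 < n * n by apply: mulr_gt0.
rewrite -(ltr_pM2l n2).
apply: lt_le_trans JS.
have : n * n * (2 * c * W) = 2 * c * r%:R ^+ 2 * m * (m * W) by rewrite hn; ring.
move=> ->.
apply: lt_le_trans (_ : r.+1%:R * K1 <= r.+1%:R * r%:R * K1).
  exact: key.
have K10 : 0 <= K1 by apply: ler0n.
rewrite -mulrA ler_pM2l ?ltr0n // ler_peMl //.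
Qed.
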